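(* For all $0\le\lambda<1$ and $0\le d<1$ there is a number $g(\lambda,d)<1$, depending only on $\lambda$ and $d$, with the following property. Let $H$ be a finite-dimensional complex Hilbert space, $U:H\to H$ unitary and $A:H\to H$ Hermitian such that $1$ is an eigenvalue of $A$ and every other eigenvalue $\mu$ of $A$ satisfies $|\mu|\le\lambda$. Let $A_{\max}$ be the eigenspace of $A$ for the eigenvalue $1$ and $P_{\max}$ the orthogonal projection onto $A_{\max}$, and assume $\|P_{\max}Uv\|\le d\|v\|$ for all $v\in A_{\max}$. Then $\|(UA)^2v\|\le g(\lambda,d)\|v\|$ for all $v\in H$, and hence $\|(UA)^k\|_{op}\le g(\lambda,d)^{\lfloor k/2\rfloor}$ for all $k\ge0$.
   Context: $\|\cdot\|_{op}$ is the operator norm. *)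

(* Defs.v *)
From HB Require Import structures.
From mathcomp Require Import all_boot all_order all_algebra.
From mathcomp Require Import all_classical all_reals.
From mathcomp Require Import complex.
Set Implicit Arguments. Unset Strict Implicit. Unset Printing Implicit Defensive.
Import Order.TTheory GRing.Theory Num.Theory.
Local Open Scope ring_scope.
Local Open Scope classical_set_scope.

Section Hilbert.
Variable R : realType.
Local Notation C := R[i].

Definition cabs (z : C) : R := Normc.normc z.

Definition cconj (z : C) : C := (z ^*)%C.

(* H = C^n with the standard inner product <u,v> = sum_i conj(u_i) v_i *)
Definition dotc n (u v : 'cV[C]_n) : C := \sum_(i < n) cconj (u i 0) * v i 0.

Definition vnorm n (v : 'cV[C]_n) : R := Num.sqrt (\sum_(i < n) cabs (v i 0) ^+ 2).

Definition adj n (M : 'M[C]_n) : 'M[C]_n := (map_mx cconj M)^T.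

Definition unitaryC n (U : 'M[C]_n) : Prop := adj U *m U = 1%:M /\ U *m adj U = 1%:M.
Definition hermitianC n (A : 'M[C]_n) : Prop := adj A = A.

Definition is_eigenvalue n (A : 'M[C]_n) (mu : C) : Prop :=
  exists v : 'cV[C]_n, v != 0 /\ A *m v = mu *: v.

Definition eigenspace_c n (A : 'M[C]_n) (mu : C) : set 'cV[C]_n :=
  [set v | A *m v = mu *: v].

Definition orth_proj_onto n (P : 'M[C]_n) (S : set 'cV[C]_n) : Prop :=
  forall v : 'cV[C]_n, S (P *m v) /\ (forall w, S w -> dotc w (v - P *m v) = 0).

Definition opnorm n (M : 'M[C]_n) : R :=
  sup [set vnorm (M *m v) | v in [set v : 'cV[C]_n | vnorm v <= 1]].

Definition mxpow n (M : 'M[C]_n) (k : nat) : 'M[C]_n := iter k (mulmx M) 1%:M.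

End Hilbert.

(* Main.v *)
Require Import Defs.
From HB Require Import structures.
From mathcomp Require Import all_boot all_order all_algebra.
From mathcomp Require Import all_classical all_reals.
From mathcomp Require Import complex spectral sesquilinear ring lra.
Import Order.TTheory GRing.Theory Num.Theory.
Local Open Scope ring_scope.
Local Open Scope sesquilinear_scope.
Set Implicit Arguments. Unset Strict Implicit. Unset Printing Implicit Defensive.

Section Aux.
Variable R : realType.
Local Notation C := R[i].

Lemma dotcE n (u v : 'cV[C]_n) : dotc u v = (u ^t* *m v) 0 0.
Proof. rewrite /dotc !mxE; apply: eq_bigr => i _; rewrite !mxE //. Qed.

Definition Nr n (v : 'cV[C]_n) : R := \sum_(i < n) cabs (v i 0) ^+ 2.

Lemma Nr_ge0 n (v : 'cV[C]_n) : 0 <= Nr v.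
Proof. by apply: sumr_ge0 => i _; rewrite sqr_ge0. Qed.

Lemma vnormE n (v : 'cV[C]_n) : vnorm v = Num.sqrt (Nr v).
Proof. by []. Qed.

Lemma vnorm_ge0 n (v : 'cV[C]_n) : 0 <= vnorm v.
Proof. exact: sqrtr_ge0. Qed.

Lemma vnorm_sqr n (v : 'cV[C]_n) : vnorm v ^+ 2 = Nr v.
Proof. by rewrite vnormE sqr_sqrtr // Nr_ge0. Qed.

Lemma NrC n (v : 'cV[C]_n) : ((Nr v)%:C)%C = dotc v v.
Proof.
rewrite /Nr /dotc rmorph_sum; apply: eq_bigr => i _.
rewrite rmorphXn /=.
have -> : ((cabs (v i 0))%:C)%C = `|v i 0| by [].
by rewrite normCKC.
Qed.

Lemma adjE n (M : 'M[C]_n) : adj M = M ^t*.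
Proof. by rewrite /adj map_trmx. Qed.

Lemma ct_mul m n p (A : 'M[C]_(m, n)) (B : 'M[C]_(n, p)) :
  (A *m B) ^t* = B ^t* *m A ^t*.
Proof. by rewrite -!map_trmx map_mxM trmx_mul. Qed.

Lemma ct_add m n (A B : 'M[C]_(m, n)) : (A + B) ^t* = A ^t* + B ^t*.
Proof. by rewrite -!map_trmx map_mxD linearD. Qed.

Lemma dotc_sym n (u v : 'cV[C]_n) : dotc v u = (dotc u v)^*.
Proof.
rewrite /dotc rmorph_sum; apply: eq_bigr => i _.
by rewrite rmorphM /= /cconj conjCK mulrC.
Qed.

Lemma dotcDr n (u v w : 'cV[C]_n) : dotc u (v + w) = dotc u v + dotc u w.
Proof. by rewrite !dotcE mulmxDr mxE. Qed.

Lemma dotcDl n (u v w : 'cV[C]_n) : dotc (v + w) u = dotc v u + dotc w u.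
Proof. by rewrite !dotcE ct_add mulmxDl mxE. Qed.

Lemma pythag n (a b : 'cV[C]_n) : dotc a b = 0 -> Nr (a + b) = Nr a + Nr b.
Proof.
move=> h; apply: (@complexI R); rewrite rmorphD /= !NrC.
rewrite dotcDl !dotcDr h [dotc b a]dotc_sym h.
by rewrite conjC0 addr0 add0r.
Qed.

Lemma unitary_Nr n (Q : 'M[C]_n) (v : 'cV[C]_n) :
  Q ^t* *m Q = 1%:M -> Nr (Q *m v) = Nr v.
Proof.
move=> h; apply: (@complexI R); rewrite !NrC !dotcE ct_mul.
by rewrite mulmxA -(mulmxA _ (Q ^t*)) h mulmx1.
Qed.

Lemma herm_dotc n (A : 'M[C]_n) (x y : 'cV[C]_n) :
  A ^t* = A -> dotc (A *m x) y = dotc x (A *m y).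
Proof. by move=> h; rewrite !dotcE ct_mul h mulmxA. Qed.


Lemma cabs_sqr (z : C) : cabs z ^+ 2 = (complex.Re z) ^+ 2 + (complex.Im z) ^+ 2.
Proof.
case: z => a b; rewrite /cabs /Normc.normc /= sqr_sqrtr //.
by apply: addr_ge0; apply: sqr_ge0.
Qed.

Lemma wtri_c (e : R) (x y : C) : 0 < e ->
  cabs (x + y) ^+ 2 <= (1 + e) * cabs x ^+ 2 + (1 + e^-1) * cabs y ^+ 2.
Proof.
move=> he; rewrite !cabs_sqr; case: x => a b; case: y => c d /=.
rewrite -subr_ge0.
have -> : (1 + e) * (a ^+ 2 + b ^+ 2) + (1 + e^-1) * (c ^+ 2 + d ^+ 2) -
   ((a + c) ^+ 2 + (b + d) ^+ 2) = e^-1 * ((e * a - c) ^+ 2 + (e * b - d) ^+ 2).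
  by field; rewrite gt_eqF.
by apply: mulr_ge0; [rewrite invr_ge0 ltW | apply: addr_ge0; apply: sqr_ge0].
Qed.

Lemma wtri n (e : R) (x y : 'cV[C]_n) : 0 < e ->
  Nr (x + y) <= (1 + e) * Nr x + (1 + e^-1) * Nr y.
Proof.
move=> he; rewrite /Nr !mulr_sumr -big_split /=; apply: ler_sum => i _.
by rewrite mxE; apply: wtri_c.
Qed.


Lemma ct_delta n (j : 'I_n) : (delta_mx j 0 : 'cV[C]_n) ^t* = delta_mx 0 j.
Proof.
apply/matrixP => a b; rewrite !mxE.
by case: (b == j); case: (a == 0); rewrite /= ?conjC1 ?conjC0.
Qed.

Lemma L0 n (A : 'M[C]_n) (lam : R) : 0 <= lam -> A ^t* = A ->
  (forall mu, is_eigenvalue A mu -> mu != 1 -> cabs mu <= lam) ->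
  forall r, (forall w, A *m w = w -> dotc w r = 0) ->
  Nr (A *m r) <= lam ^+ 2 * Nr r.
Proof.
move=> hl hA hev r hr.
have normal : A \is normalmx by apply/normalmxP; rewrite hA.
set Q := spectralmx A; set D := spectral_diag A.
have hAeq : A = invmx Q *m diag_mx D *m Q by move/orthomx_spectralP: normal.
have Qu : Q \is unitarymx := spectral_unitarymx A.
have QQt : Q *m Q ^t* = 1%:M by apply/unitarymxP.
have QtQ : Q ^t* *m Q = 1%:M.
  by rewrite -(invmx_unitary Qu) mulVmx // spectral_unit.
rewrite (invmx_unitary Qu) in hAeq.
have -> : A *m r = Q ^t* *m (diag_mx D *m (Q *m r)) by rewrite hAeq !mulmxA.
rewrite unitary_Nr; last by rewrite trmxCK.
rewrite -(unitary_Nr r QtQ).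
set y := Q *m r.
rewrite /Nr mulr_sumr; apply: ler_sum => j _.
rewrite mul_diag_mx mxE /cabs Normc.normcM -/(cabs _) -/(cabs _) exprMn.
set e : 'cV[C]_n := delta_mx j 0.
set q := Q ^t* *m e.
have Aq : A *m q = D 0 j *: q.
  rewrite hAeq /q -!mulmxA (mulmxA Q) QQt mul1mx scalemxAr.
  congr (_ *m _).
  apply/matrixP => a b; rewrite mul_diag_mx !mxE.
  by case: (a =P j) => [->|]; rewrite ?mulr1 ?mulr0.
have yq : dotc q r = y j 0.
  rewrite dotcE /q ct_mul trmxCK ct_delta -mulmxA -rowE mxE //.
have [/eqP D1|D1] := boolP (D 0 j == 1).
  have : dotc q r = 0 by apply: hr; rewrite Aq D1 scale1r.
  rewrite yq => ->.
  by rewrite /cabs Normc.normc0 expr0n /= !mulr0.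
have qn0 : q != 0.
  apply/eqP => q0.
  have : Q *m q = e by rewrite /q mulmxA QQt mul1mx.
  rewrite q0 mulmx0 => /matrixP /(_ j 0); rewrite !mxE !eqxx /=.
  by move/eqP; rewrite eq_sym oner_eq0.
have hD : cabs (D 0 j) <= lam by apply: hev => //; exists q.
apply: ler_wpM2r; first exact: sqr_ge0.
have c0 : 0 <= cabs (D 0 j) by case: (D 0 j) => a b; apply: sqrtr_ge0.
by rewrite !expr2; apply: ler_pM.
Qed.


Lemma Nr_cabs_eig n (A P : 'M[C]_n) :
  orth_proj_onto P (eigenspace_c A 1) ->
  forall z, A *m (P *m z) = P *m z /\
    (forall w, A *m w = w -> dotc w (z - P *m z) = 0).
Proof.
move=> hP z; have [h1 h2] := hP z; split.
  by move: h1; rewrite /eigenspace_c /= scale1r.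
by move=> w hw; apply: h2; rewrite /eigenspace_c /= scale1r.
Qed.

Lemma L1 n (A P : 'M[C]_n) (lam : R) : 0 <= lam -> A ^t* = A ->
  (forall mu, is_eigenvalue A mu -> mu != 1 -> cabs mu <= lam) ->
  orth_proj_onto P (eigenspace_c A 1) ->
  forall z, Nr z = Nr (P *m z) + Nr (z - P *m z) /\
    Nr (A *m z) <= Nr (P *m z) + lam ^+ 2 * Nr (z - P *m z).
Proof.
move=> hl hA hev hP z.
have [Ap hr] := Nr_cabs_eig hP z.
set p := P *m z in Ap hr *; set r := z - p in hr *.
have pr : dotc p r = 0 by apply: hr.
split.
  by rewrite -pythag // /r addrC subrK.
have -> : A *m z = p + A *m r by rewrite /r mulmxBr Ap addrC subrK.
rewrite pythag; last by rewrite -herm_dotc // Ap.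
by rewrite lerD2l; apply: L0.
Qed.

Lemma step n (U A P : 'M[C]_n) (lam d e : R) :
  0 <= lam -> 0 <= d -> 0 < e -> U ^t* *m U = 1%:M -> A ^t* = A ->
  (forall mu, is_eigenvalue A mu -> mu != 1 -> cabs mu <= lam) ->
  orth_proj_onto P (eigenspace_c A 1) ->
  (forall v, eigenspace_c A 1 v -> vnorm (P *m (U *m v)) <= d * vnorm v) ->
  forall v,
  let y := U *m (A *m v) in
  [/\ Nr (A *m y) <= Nr (P *m y) + lam ^+ 2 * (Nr y - Nr (P *m y)),
      Nr (P *m y) <= Nr y,
      Nr y <= Nr (P *m v) + lam ^+ 2 * Nr (v - P *m v),
      Nr (P *m y) <= (1 + e) * d ^+ 2 * Nr (P *m v) +
                     (1 + e^-1) * (lam ^+ 2 * Nr (v - P *m v)) &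
      Nr v = Nr (P *m v) + Nr (v - P *m v)].
Proof.
move=> hl hd he hU hA hev hP hPU v y.
have [ey1 ey2] := L1 hl hA hev hP y.
have [ev1 ev2] := L1 hl hA hev hP v.
have [Ap hr] := Nr_cabs_eig hP v.
split => //.
- by rewrite ey1 addrAC subrr add0r.
- by rewrite ey1 lerDl Nr_ge0.
- by rewrite /y unitary_Nr.
have -> : P *m y = P *m (U *m (P *m v)) + P *m (U *m (A *m (v - P *m v))).
  by rewrite /y -mulmxDr -mulmxDr mulmxBr Ap addrC subrK.
apply: le_trans (wtri _ _ he) _.
rewrite -mulrA; apply: lerD; apply: ler_wpM2l.
- by apply: addr_ge0 => //; apply: ltW.
- have h : vnorm (P *m (U *m (P *m v))) <= d * vnorm (P *m v).
    by apply: hPU; rewrite /eigenspace_c /= scale1r.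
  rewrite -!vnorm_sqr -exprMn !expr2.
  by apply: ler_pM => //; exact: vnorm_ge0.
- by apply: addr_ge0 => //; rewrite invr_ge0 ltW.
- have [h1 _] := L1 hl hA hev hP (U *m (A *m (v - P *m v))).
  apply: le_trans (_ : Nr (U *m (A *m (v - P *m v))) <= _).
    by rewrite h1 lerDl Nr_ge0.
  rewrite unitary_Nr //; apply: L0 => //.
Qed.


Lemma arith (L c K t a b Y T Pq : R) :
  0 <= L -> L <= 1 -> 0 <= a -> 0 <= b -> 0 <= c -> c <= 1 -> 0 <= K -> 0 <= t ->
  K * t <= (1 - c) / 4 -> t <= (1 - c) / 2 ->
  T <= Pq + L * (Y - Pq) -> Pq <= Y -> Y <= a + L * b ->
  Pq <= c * a + K * (L * b) ->
  T <= (1 - (1 - L) * t) * (a + b).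
Proof.
move=> L0 L1 a0 b0 c0 c1 K0 t0 Kt tc TPY PqY Ya Pqb.
have TY : T <= Y.
  have : L * (Y - Pq) <= Y - Pq by rewrite ler_piMl //; lra.
  lra.
have TP : T <= L * Y + (1 - L) * Pq by lra.
have [bt|bt] := lerP (t * (a + b)) b.
  have : (1 - L) * (t * (a + b)) <= (1 - L) * b by apply: ler_wpM2l; lra.
  nra.
have h1 : K * (L * b) <= K * (t * (a + b)).
  apply: ler_wpM2l => //. have: L * b <= b by nra. lra.
have h2 : Pq <= c * (a + b) + (1 - c) / 4 * (a + b).
  have : K * (t * (a + b)) <= (1 - c)/4 * (a + b) by rewrite mulrA; apply: ler_wpM2r; lra.
  nra.
have h3 : (1 - L) * Pq <= (1 - L) * (c * (a + b) + (1 - c) / 4 * (a + b)) by apply: ler_wpM2l; lra.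
have h4 : L * Y <= L * (a + b) by apply: ler_wpM2l => //; nra.
have h5 : 0 <= (1 - L) * ((a + b) * (3 * (1 - c) / 4 - t)).
  apply: mulr_ge0; first lra. apply: mulr_ge0; lra.
nra.
Qed.

Lemma vnorm0 n : vnorm (0 : 'cV[C]_n) = 0.
Proof.
rewrite vnormE /Nr big1 ?sqrtr0 // => i _.
by rewrite mxE /cabs Normc.normc0 expr0n.
Qed.

End Aux.

Theorem mainTheorem9 (R : realType) (lam d : R) (hlam0 : 0 <= lam) (hlam1 : lam < 1)
    (hd0 : 0 <= d) (hd1 : d < 1) :
  exists g : R, g < 1 /\
  forall (n : nat) (U A P : 'M[R[i]]_n),
    unitaryC U -> hermitianC A ->
    is_eigenvalue A 1 ->
    (forall mu : R[i], is_eigenvalue A mu -> mu != 1 -> cabs mu <= lam) ->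
    orth_proj_onto P (eigenspace_c A 1) ->
    (forall v, eigenspace_c A 1 v -> vnorm (P *m (U *m v)) <= d * vnorm v) ->
    (forall v : 'cV[R[i]]_n, vnorm (mxpow (U *m A) 2 *m v) <= g * vnorm v) /\
    (forall k : nat, opnorm (mxpow (U *m A) k) <= g ^+ (k./2)).
Proof.
set L := lam ^+ 2; set D := d ^+ 2.
have L0 : 0 <= L by rewrite /L sqr_ge0.
have L1 : L < 1 by rewrite /L; nra.
have D0 : 0 <= D by rewrite /D sqr_ge0.
have D1 : D < 1 by rewrite /D; nra.
pose e := (1 - D) / 2.
have e0 : 0 < e by rewrite /e; lra.
pose c := (1 + e) * D.
have c0 : 0 <= c by rewrite /c; apply: mulr_ge0 => //; lra.
have c1 : c < 1 by rewrite /c /e; nra.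
pose K := 1 + e^-1.
have K1 : 1 <= K by rewrite /K lerDl invr_ge0 ltW.
have K0 : 0 < K by lra.
pose t := (1 - c) / (4 * K).
have t0 : 0 < t by rewrite /t divr_gt0 //; lra.
have Kt : K * t = (1 - c) / 4 by rewrite /t; field; lra.
have tc : t <= (1 - c) / 2.
  have : t <= K * t by rewrite ler_peMl //; lra.
  lra.
pose G := 1 - (1 - L) * t.
have G0 : 0 <= G.
  have : (1 - L) * t <= t by rewrite ler_piMl //; lra.
  have : t <= 1 / 2 by lra.
  rewrite /G; lra.
have G1 : G < 1.
  have : 0 < (1 - L) * t by apply: mulr_gt0 => //; lra.
  rewrite /G; lra.
exists (Num.sqrt G); split.
  by rewrite -sqrtr1 ltr_sqrt //; lra.
move=> n U A P hU hA _ hev hP hPU.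
have hU' : U ^t* *m U = 1%:M by rewrite -adjE; case: hU.
have hA' : A ^t* = A by rewrite -adjE.
have key : forall v, Nr (U *m (A *m (U *m (A *m v)))) <= G * Nr v /\
                     Nr (U *m (A *m v)) <= Nr v.
  move=> v; have [h1 h2 h3 h4 h5] := step hlam0 hd0 e0 hU' hA' hev hP hPU v.
  rewrite !(unitary_Nr _ hU') in h1 h2 h3 h4 *.
  rewrite h5; split.
    have Kle : K * t <= (1 - c) / 4 by rewrite Kt.
    exact: (arith L0 (ltW L1) (Nr_ge0 _) (Nr_ge0 _) c0 (ltW c1) (ltW K0) (ltW t0) Kle tc h1 h2 h3 h4).
  apply: (le_trans h3); rewrite lerD2l ler_piMl //; [exact: Nr_ge0| exact: ltW L1].
have g0 : 0 <= Num.sqrt G by apply: sqrtr_ge0.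
have key2 : forall w, vnorm (U *m A *m (U *m A *m w)) <= Num.sqrt G * vnorm w.
  move=> w; rewrite !vnormE -sqrtrM // ler_sqrt; last by apply: mulr_ge0 => //; exact: Nr_ge0.
  by rewrite -!mulmxA; case: (key w).
have key1 : forall w, vnorm (U *m A *m w) <= vnorm w.
  move=> w; rewrite !vnormE ler_sqrt; last exact: Nr_ge0.
  by rewrite -!mulmxA; case: (key w).
have pw : forall k, (forall v, vnorm (mxpow (U *m A) k *m v) <= Num.sqrt G ^+ (k./2) * vnorm v) /\
                    (forall v, vnorm (mxpow (U *m A) k.+1 *m v) <= Num.sqrt G ^+ (k.+1./2) * vnorm v).
  elim => [|k [IH1 IH2]].
    split => v; rewrite /mxpow /= ?mulmx1 ?mul1mx expr0 mul1r //.
  split => // v.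
  have -> : mxpow (U *m A) k.+2 *m v = U *m A *m (U *m A *m (mxpow (U *m A) k *m v)).
    by rewrite /mxpow /= !mulmxA.
  rewrite [k.+2./2]/= exprS -mulrA.
  apply: (le_trans (key2 _)); apply: ler_wpM2l => //.
split.
  move=> v; rewrite /mxpow /= mulmx1 -mulmxA; exact: key2.
move=> k; apply: ge_sup.
  exists (vnorm (mxpow (U *m A) k *m 0)), 0 => //.
  by rewrite /= vnorm0 ler01.
move=> _ [v hv <-].
apply: (le_trans ((pw k).1 v)); rewrite ler_piMr //; exact: exprn_ge0.
Qed.
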